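(* Let $R>0$ and let $E\subset\mathbb{R}^d$ be a body. Then $$(\partial E_R)'_R = co_R(E)\,\cup\, E'_{2R}.$$
   Context: A body is a nonempty closed subset of $\mathbb{R}^d$. Fix $R>0$; for $x\in\mathbb{R}^d$ let $B(x)=\{y:|y-x|<R\}$ be the open ball of radius $R$ centered at $x$. For a set $A\subset\mathbb{R}^d$ and $\rho>0$ put $A_\rho=\{x:\operatorname{dist}(x,A)<\rho\}$ and $A'_\rho=\mathbb{R}^d\setminus A_\rho=\{x:\operatorname{dist}(x,A)\ge\rho\}$ (with $\emptyset'_\rho=\mathbb{R}^d$). For a body $E$, the $R$-hulloid is $co_R(E)=\bigcap\{\mathbb{R}^d\setminus B : B \text{ an open ball of radius } R,\ B\cap E=\emptyset\}$, with $co_R(E)=\mathbb{R}^d$ if there is no such ball. *)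

(* Defs.v *)
From mathcomp Require Import all_boot all_order all_algebra.
From mathcomp Require Import boolp classical_sets reals.
Set Implicit Arguments.
Unset Strict Implicit.
Unset Printing Implicit Defensive.
Import Order.TTheory GRing.Theory Num.Theory.
Local Open Scope ring_scope.
Local Open Scope classical_set_scope.

Section Defs.
Variables (R : realType) (d : nat).
Notation pt := 'rV[R]_d.

Definition edist (x y : pt) : R :=
  Num.sqrt (\sum_(i < d) (x ord0 i - y ord0 i) ^+ 2).

Definition eball (c : pt) (r : R) : set pt := [set y | edist y c < r].

(* A_rho = {x | dist(x,A) < rho}  (dist(x,A) < rho iff some a in A is closer than rho) *)
Definition thicken (A : set pt) (rho : R) : set pt :=
  [set x | exists2 a, A a & edist x a < rho].

(* A'_rho = R^d \ A_rho = {x | dist(x,A) >= rho};  empty'_rho = R^d *)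
Definition far (A : set pt) (rho : R) : set pt := ~` thicken A rho.

Definition eclosure (A : set pt) : set pt :=
  [set x | forall e : R, 0 < e -> exists2 a, A a & edist x a < e].
Definition einterior (A : set pt) : set pt :=
  [set x | exists2 e : R, 0 < e & eball x e `<=` A].
Definition eboundary (A : set pt) : set pt := eclosure A `\` einterior A.

Definition body (E : set pt) : Prop := E !=set0 /\ eclosure E `<=` E.

(* R-hulloid: intersection of complements of open R-balls disjoint from E
   (= R^d when there is no such ball) *)
Definition coR (r : R) (E : set pt) : set pt :=
  [set x | forall c : pt, eball c r `&` E = set0 -> ~ eball c r x].

End Defs.

(* Main.v *)
Require Import Defs.
From mathcomp Require Import all_boot all_order all_algebra.
From mathcomp Require Import boolp classical_sets reals.
From mathcomp Require Import ring lra.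
Import Order.TTheory GRing.Theory Num.Theory.
Local Open Scope ring_scope.
Local Open Scope classical_set_scope.
Set Implicit Arguments.
Unset Strict Implicit.
Section Norm.
Variables (R : realType) (d : nat).

Lemma cauchy_schwarz (a b : 'I_d -> R) :
  (\sum_i a i * b i) ^+ 2 <= (\sum_i a i ^+ 2) * (\sum_i b i ^+ 2).
Proof.
set A := \sum_i a i ^+ 2; set B := \sum_i b i ^+ 2; set D := \sum_i a i * b i.
have H : 0 <= \sum_i \sum_j (a i * b j - a j * b i) ^+ 2.
  by apply: sumr_ge0 => i _; apply: sumr_ge0 => j _; exact: sqr_ge0.
have E : \sum_i \sum_j (a i * b j - a j * b i) ^+ 2 = 2 * (A * B - D ^+ 2).
  rewrite (eq_bigr (fun i => a i ^+ 2 * B + b i ^+ 2 * A - (2 * D) * (a i * b i))).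
    rewrite sumrB big_split /= -!mulr_suml -mulr_sumr -/A -/B -/D; ring.
  move=> i _; rewrite -mulrA [D * _]mulrC mulrA /A /B /D !mulr_sumr -big_split -sumrB /=.
  by apply: eq_bigr => j _; ring.
move: H; rewrite E; nra.
Qed.

Definition nrm (u : 'rV[R]_d) := Num.sqrt (\sum_(i < d) u ord0 i ^+ 2).

Lemma nrm_ge0 u : 0 <= nrm u.
Proof. exact: sqrtr_ge0. Qed.

Lemma nrm0 : nrm 0 = 0.
Proof. by rewrite /nrm big1 ?sqrtr0 // => i _; rewrite mxE expr0n. Qed.

Lemma nrmZ k u : nrm (k *: u) = `|k| * nrm u.
Proof.
rewrite /nrm (eq_bigr (fun i => k ^+ 2 * u ord0 i ^+ 2)); last first.
  by move=> i _; rewrite mxE exprMn.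
by rewrite -mulr_sumr sqrtrM ?sqr_ge0 // sqrtr_sqr.
Qed.

Lemma nrmD u v : nrm (u + v) <= nrm u + nrm v.
Proof.
rewrite /nrm.
set A := \sum_i u ord0 i ^+ 2; set B := \sum_i v ord0 i ^+ 2.
set D := \sum_i u ord0 i * v ord0 i.
have A0 : 0 <= A by apply: sumr_ge0 => i _; exact: sqr_ge0.
have B0 : 0 <= B by apply: sumr_ge0 => i _; exact: sqr_ge0.
have CS : D <= Num.sqrt A * Num.sqrt B.
  rewrite -sqrtrM // (le_trans (ler_norm D)) // -sqrtr_sqr.
  by apply: ler_wsqrtr; exact: cauchy_schwarz.
have -> : \sum_i (u + v) ord0 i ^+ 2 = A + 2 * D + B.
  rewrite /A /B /D mulr_sumr -!big_split /=.
  by apply: eq_bigr => i _; rewrite mxE; ring.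
have hA := sqr_sqrtr A0; have hB := sqr_sqrtr B0.
have sA := sqrtr_ge0 A; have sB := sqrtr_ge0 B.
rewrite -[Num.sqrt A + Num.sqrt B]ger0_norm ?addr_ge0 // -sqrtr_sqr.
apply: ler_wsqrtr; nra.
Qed.

Lemma nrmN u : nrm (- u) = nrm u.
Proof. by rewrite -scaleN1r nrmZ normrN normr1 mul1r. Qed.

Lemma edistE (x y : 'rV[R]_d) : edist x y = nrm (x - y).
Proof. by rewrite /edist /nrm; apply: congr1; apply: eq_bigr => i _; rewrite !mxE. Qed.

Lemma edist_ge0 (x y : 'rV[R]_d) : 0 <= edist x y.
Proof. exact: sqrtr_ge0. Qed.

Lemma edist_sym (x y : 'rV[R]_d) : edist x y = edist y x.
Proof. by rewrite !edistE -nrmN opprB. Qed.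

Lemma edistxx (x : 'rV[R]_d) : edist x x = 0.
Proof. by rewrite edistE subrr nrm0. Qed.

Lemma edist_tri (x y z : 'rV[R]_d) : edist x z <= edist x y + edist y z.
Proof.
rewrite !edistE; have -> : x - z = (x - y) + (y - z) by rewrite addrA subrK.
exact: nrmD.
Qed.

End Norm.
Unset Implicit Arguments.
Set Strict Implicit.
Theorem mainTheorem1 (R : realType) (d : nat) (r : R) (E : set 'rV[R]_d) :
  0 < r -> body E ->
  far (eboundary (thicken E r)) r = coR r E `|` far E (2 * r).
Proof.
move=> r0 _.
set F := thicken E r.
apply/seteqP; split => x.
- move=> Hx.
  case: (pselect (coR r E x)) => [?|nco]; [by left|right].
  move=> [e Ee hxe]; apply: Hx.
  have [c [hc hxc]] : exists c, eball c r `&` E = set0 /\ eball c r x.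
    apply: contrapT => H; apply: nco => c hc hx; apply: H; by exists c.
  rewrite /eball /= in hxc.
  pose p := x + 2^-1 *: (e - x).
  have hxp : edist x p < r.
    rewrite edistE.
    have -> : x - p = (- 2^-1) *: (e - x) by apply/rowP => i; rewrite !mxE; ring.
    rewrite nrmZ -edistE (edist_sym e x) normrN ger0_norm ?invr_ge0 ?ler0n //; lra.
  have hpF : F p.
    exists e => //; rewrite edistE.
    have -> : p - e = 2^-1 *: (x - e) by apply/rowP => i; rewrite !mxE; field.
    rewrite nrmZ -edistE ger0_norm ?invr_ge0 ?ler0n //; lra.
  have hcF : ~ F c.
    move=> [a Ea hca]; have : (eball c r `&` E) a.
      by split => //; rewrite /eball /= edist_sym.
    by rewrite hc.
  pose g (s : R) := c + s *: (p - c).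
  pose N := nrm (p - c).
  have N0 : 0 <= N by exact: nrm_ge0.
  have gdist s u : edist (g s) (g u) = `|s - u| * N.
    rewrite edistE -nrmZ; congr nrm; apply/rowP => i; rewrite !mxE; ring.
  pose S := [set s : R | (0 <= s <= 1) /\ ~ F (g s)].
  have S0 : S 0.
    split; first by rewrite lexx ler01.
    by rewrite /g scale0r addr0.
  have hS : has_sup S.
    split; first by exists 0.
    by exists 1 => s [/andP[_ ->]].
  pose t := sup S.
  have t0 : 0 <= t by exact: (sup_upper_bound hS).
  have t1 : t <= 1 by apply: ge_sup; [exists 0 | move=> s [/andP[_ ->]]].
  pose y := g t.
  have hyF : ~ F y.
    move=> [a Ea hya].
    pose dl := r - edist y a.
    have dl0 : 0 < dl by rewrite subr_gt0.
    pose et := dl / (N + 1).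
    have N1 : 0 < N + 1 by lra.
    have et0 : 0 < et by rewrite divr_gt0.
    have etE : et * (N + 1) = dl by rewrite /et divfK // gt_eqF.
    have [s hsS hs] := sup_adherent et0 hS; case: (hsS) => /andP[s0 s1] nFs.
    have st : s <= t := sup_upper_bound hS hsS.
    apply: nFs; exists a => //.
    apply: (le_lt_trans (edist_tri _ (g t) _)).
    rewrite gdist ler0_norm ?subr_le0 //.
    rewrite -/y; move: hs; rewrite -/t; rewrite /dl in etE; nra.
  have t_lt1 : t < 1.
    rewrite lt_neqAle t1 andbT; apply/eqP => ht; apply: hyF.
    by rewrite /y /g ht scale1r addrC subrK.
  have hycl : eclosure F y.
    move=> eps eps0.
    pose et := Num.min (1 - t) (eps / (N + 1)).
    have N1 : 0 < N + 1 by lra.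
    have et0 : 0 < et by rewrite lt_min subr_gt0 t_lt1 divr_gt0.
    have et1 : et <= 1 - t by rewrite ge_min lexx.
    have et2 : et <= eps / (N + 1) by rewrite ge_min lexx orbT.
    have et3 : et * (N + 1) <= eps by rewrite -ler_pdivlMr.
    exists (g (t + et)).
      apply: contrapT => nF.
      have : S (t + et) by split => //; apply/andP; split; lra.
      move/(sup_upper_bound hS); rewrite -/t; lra.
    rewrite /y gdist; have -> : t - (t + et) = - et by ring.
    rewrite normrN gtr0_norm //; nra.
  have hyint : ~ einterior F y.
    move=> [e0 e00 sub]; apply: hyF; apply: sub.
    by rewrite /eball /= edistxx.
  exists y; first by split.
  rewrite edistE.
  have -> : x - y = (1 - t) *: (x - c) + t *: (x - p).
    by apply/rowP => i; rewrite /y /g !mxE; ring.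
  apply: (le_lt_trans (nrmD _ _)).
  rewrite !nrmZ -!edistE !ger0_norm ?subr_ge0 //.
  have := edist_ge0 x c; have := edist_ge0 x p; nra.
- case => [hco | hfar] [b [hbcl hbint] hxb].
  + apply: hbint; exists (r - edist x b); first by rewrite subr_gt0.
    move=> z hz; rewrite /eball /= in hz.
    apply: contrapT => nFz.
    apply: (hco z).
      rewrite -subset0 => a [hza Ea]; apply: nFz; exists a => //.
      by rewrite edist_sym.
    rewrite /eball /=.
    apply: (le_lt_trans (edist_tri _ b _)); rewrite (edist_sym b); lra.
  + apply: hfar.
    have [z [a Ea hza] hbz] := hbcl (r - edist x b) (ltac:(rewrite subr_gt0 //)).
    exists a => //.
    apply: (le_lt_trans (edist_tri _ b _)).
    apply: (le_lt_trans (lerD (lexx _) (edist_tri _ z _))); lra.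
Qed.
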